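(* Let $-\beta\in(0,1)$ and $c\in(0,1)$, and let $n\geq 2$ be an integer. Denote the zeros of the monic Meixner polynomial $M_n(x;\beta,c)$ by $z_{1,n}<z_{2,n}<\dots<z_{n,n}$ (they are real and distinct). Then $$z_{1,n}<0<1<z_{2,n}.$$
   Context: Monic Meixner polynomials are defined by $$M_n(x;\beta,c)=\left(\frac{c}{c-1}\right)^n(\beta)_n\sum_{k=0}^{n}\frac{(-n)_k(-x)_k(1-\frac1c)^k}{(\beta)_k\,k!},$$ for real $\beta,c$ with $c\neq 0$ and $\beta\notin\{-1,-2,\dots,-n+1\}$, where $(\alpha)_0=1$ and $(\alpha)_k=\alpha(\alpha+1)\cdots(\alpha+k-1)$ for $k\geq1$. For $-\beta,c\in(0,1)$ and $n\ge 2$, the zeros of $M_n(x;\beta,c)$ are known to be real and distinct. *)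

(* Defs.v *)
From mathcomp Require Import all_boot all_order all_algebra.
Set Implicit Arguments. Unset Strict Implicit. Unset Printing Implicit Defensive.
Import Order.TTheory GRing.Theory Num.Theory.
Local Open Scope ring_scope.

Definition poch {R : pzRingType} (a : R) (k : nat) : R :=
  \prod_(i < k) (a + i%:R).

(* Monic Meixner polynomial M_n(x; beta, c), as a function of x *)
Definition meixner {R : fieldType} (n : nat) (beta c x : R) : R :=
  (c / (c - 1)) ^+ n * poch beta n *
  \sum_(k < n.+1) (poch (- n%:R) k * poch (- x) k * (1 - c^-1) ^+ k)
                  / (poch beta k * k`!%:R).

(* Main.v *)
Require Import Defs.
From mathcomp Require Import all_boot all_order all_algebra.
From mathcomp Require Import ring lra.
From mathcomp.real_closed Require Import polyrcf.
Import Order.TTheory GRing.Theory Num.Theory.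
Local Open Scope ring_scope.

Lemma poch0 (R : pzRingType) (a : R) : poch a 0 = 1.
Proof. by rewrite /poch big_ord0. Qed.

Lemma pochS (R : pzRingType) (a : R) k : poch a k.+1 = poch a k * (a + k%:R).
Proof. by rewrite /poch big_ord_recr. Qed.

Lemma pochSl (R : comPzRingType) (a : R) k : poch a k.+1 = a * poch (a + 1) k.
Proof.
rewrite /poch big_ord_recl /= addr0; congr (_ * _).
by apply: eq_bigr => i _; rewrite /bump /= add1n -addrA -nat1r.
Qed.

Lemma poch_vanish (R : comPzRingType) (n k : nat) : (n < k)%N -> poch (- (n%:R : R)) k = 0.
Proof.
elim: k => // k IH; rewrite ltnS leq_eqVlt pochS => /orP[/eqP ->|/IH ->].
  by rewrite addNr mulr0.
by rewrite mul0r.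
Qed.

Lemma poch_gt0 (R : numFieldType) (g : R) k : 0 < g -> 0 < poch g k.
Proof.
move=> g0; apply: prodr_gt0 => i _; apply: ltr_wpDr => //.
Qed.

Lemma poch_x0 (R : comPzRingType) k : poch (- (0 : R)) k.+1 = 0.
Proof. by rewrite pochSl oppr0 mul0r. Qed.

Definition lin {R : fieldType} (N : nat) (a : nat -> R) (x : R) : R :=
  \sum_(k < N) a k * poch (- x) k.

Lemma linD (R : fieldType) N (a b : nat -> R) x :
  lin N a x + lin N b x = lin N (fun k => a k + b k) x.
Proof. by rewrite /lin -big_split; apply: eq_bigr => i _; rewrite mulrDl. Qed.

Lemma linZ (R : fieldType) N (a : nat -> R) r x :
  r * lin N a x = lin N (fun k => r * a k) x.
Proof. by rewrite /lin mulr_sumr; apply: eq_bigr => i _; rewrite mulrA. Qed.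

Lemma lin_ext (R : fieldType) N (a b : nat -> R) x :
  (forall k, (k < N)%N -> a k = b k) -> lin N a x = lin N b x.
Proof. by move=> H; apply: eq_bigr => i _; rewrite H. Qed.

Lemma sum_shift (R : fieldType) M (F G : nat -> R) :
  F 0%N = 0 -> G M = 0 -> (forall k, F k.+1 = G k) ->
  \sum_(k < M.+1) F k = \sum_(k < M.+1) G k.
Proof.
move=> F0 GM FG; rewrite big_ord_recl big_ord_recr /= F0 GM add0r addr0.
by apply: eq_bigr => i _; rewrite FG.
Qed.

Lemma linX (R : fieldType) M (a : nat -> R) x : a M = 0 ->
  x * lin M.+1 a x =
  lin M.+1 (fun k => k%:R * a k - (if k is j.+1 then a j else 0)) x.
Proof.
move=> aM.
have E : forall k, x * (a k * poch (- x) k) =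
   k%:R * a k * poch (-x) k - a k * poch (- x) k.+1.
  by move=> k; rewrite pochS; ring.
rewrite /lin mulr_sumr (eq_bigr _ (fun (i : 'I__) _ => E i)) sumrB.
rewrite -(@sum_shift _ M (fun k => (if k is j.+1 then a j else 0) * poch (-x) k)
                   (fun k => a k * poch (- x) k.+1)) //=; last by rewrite aM mul0r.
  by rewrite -sumrB; apply: eq_bigr => i _; rewrite mulrBl.
by rewrite mul0r.
Qed.

Lemma linS (R : fieldType) M (a : nat -> R) y : a M.+1 = 0 ->
  lin M.+1 a (y + 1) = lin M.+1 (fun k => a k - k.+1%:R * a k.+1) y.
Proof.
move=> aM.
have E : forall k, a k * poch (- (y + 1)) k =
   a k * poch (- y) k - a k * (k%:R * poch (- y) k.-1).
  case=> [|k]; first by rewrite !poch0 mul0r mulr0 subr0.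
  rewrite pochSl /= pochS opprD addrNK; ring.
rewrite /lin (eq_bigr _ (fun (i : 'I__) _ => E i)) sumrB.
rewrite (@sum_shift _ M (fun k => a k * (k%:R * poch (-y) k.-1))
                   (fun k => a k.+1 * k.+1%:R * poch (- y) k)) //=; last first.
- by move=> k; rewrite mulrA.
- by rewrite aM !mul0r.
- by rewrite mul0r mulr0.
by rewrite -sumrB; apply: eq_bigr => i _; ring.
Qed.

Definition alpha {R : fieldType} (g z : R) (m : nat) (k : nat) : R :=
  poch (- (m%:R)) k * z ^+ k / (poch g k * k`!%:R).

Lemma meixner_lin (R : fieldType) n (b c x : R) :
  meixner n b c x = (c / (c - 1)) ^+ n * poch b n * lin n.+1 (alpha b (1 - c^-1) n) x.
Proof.
rewrite /meixner /lin; congr (_ * _); apply: eq_bigr => i _.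
by rewrite /alpha; ring.
Qed.

Lemma alpha_vanish (R : fieldType) (g z : R) m k : (m < k)%N -> alpha g z m k = 0.
Proof. by move=> H; rewrite /alpha poch_vanish // !mul0r. Qed.

Lemma lin_alpha_ext (R : fieldType) (g z x : R) m d :
  lin (m.+1 + d) (alpha g z m) x = lin m.+1 (alpha g z m) x.
Proof.
elim: d => [|d IH]; first by rewrite addn0.
rewrite addnS /lin big_ord_recr /= alpha_vanish ?mul0r ?addr0 //.
by rewrite ltnS leq_addr.
Qed.

Lemma poch1 (R : pzRingType) (a : R) : poch a 1 = a.
Proof. by rewrite /poch big_ord1 addr0. Qed.

Lemma pochSl' (R : comPzRingType) (a b : R) k : a + 1 = b -> poch a k.+1 = a * poch b k.
Proof. by move=> <-; apply: pochSl. Qed.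

Lemma poch_m1 (R : comPzRingType) (a : R) k : poch (a - 1) k.+1 = (a - 1) * poch a k.
Proof. by apply: pochSl'; rewrite subrK. Qed.

Lemma poch_m2 (R : comPzRingType) (a : R) k : poch (a - 2) k.+1 = (a - 2) * poch (a - 1) k.
Proof. by apply: pochSl'; ring. Qed.

Lemma natS (R : pzSemiRingType) n : (n.+1%:R : R) = n%:R + 1.
Proof. by rewrite mulrSr. Qed.

Lemma poch_neq0 (R : realFieldType) (g : R) k : 0 < g -> poch g k != 0.
Proof. by move=> g0; rewrite gt_eqF // poch_gt0. Qed.

Lemma coef_rec (R : realFieldType) (g c : R) n k : 0 < g -> c != 0 ->
  (c - 1) * (k%:R * alpha g (1 - c^-1) n.+1 k -
     (if k is j.+1 then alpha g (1 - c^-1) n.+1 j else 0)) =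
  c * (n.+1%:R + g) * alpha g (1 - c^-1) n.+2 k
  - (n.+1%:R + (n.+1%:R + g) * c) * alpha g (1 - c^-1) n.+1 k
  + n.+1%:R * alpha g (1 - c^-1) n k.
Proof.
move=> g0 c0.
have e1 : - (n.+1%:R : R) = - n%:R - 1 by rewrite natS; ring.
have e2 : - (n.+2%:R : R) = - n%:R - 2 by rewrite !natS; ring.
rewrite /alpha e1 e2.
have gj : forall j, g + j%:R != 0.
  by move=> j; rewrite gt_eqF // ltr_wpDr.
have fn : forall j, (j`!%:R : R) != 0 by move=> j; rewrite pnatr_eq0 -lt0n fact_gt0.
have jn : forall j, (j.+1%:R : R) != 0 by move=> j; rewrite pnatr_eq0.
have g0' : g != 0 by rewrite gt_eqF.
case: k => [|[|j]].
- rewrite !poch0 /= fact0; field; rewrite ?c0 //.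
- rewrite /= !poch1 !poch0 fact0 expr1 expr0 mulr1 mul1r; field; rewrite ?c0 ?g0' //.
rewrite /= poch_m2 !poch_m1 !pochS !factS !natrM.
have := gj j; have := gj j.+1; have := jn j; have := jn j.+1; have := fn j.
have := @poch_neq0 _ g j g0.
move=> h1 h2 h3 h4 h5 h6.
rewrite !exprS.
move: (poch (- n%:R) j) ((1 - c^-1) ^+ j) => P Z.
rewrite !natS in h3 h4 h5 *.
by field; rewrite h1 h2 h3 h4 h5 h6 c0.
Qed.

Lemma linB (R : fieldType) N (a b : nat -> R) x :
  lin N a x - lin N b x = lin N (fun k => a k - b k) x.
Proof. by rewrite /lin -sumrB; apply: eq_bigr => i _; rewrite mulrBl. Qed.

Lemma meixner_rec (R : realFieldType) (g c x : R) n : 0 < g -> 0 < c -> c < 1 ->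
  meixner n.+2 g c x =
  (x - (n.+1%:R + (n.+1%:R + g) * c) / (1 - c)) * meixner n.+1 g c x
  - (n.+1%:R * (n%:R + g) * c / (1 - c) ^+ 2) * meixner n g c x.
Proof.
move=> g0 c0 c1.
set z := 1 - c^-1.
have E1 : lin n.+2 (alpha g z n.+1) x = lin n.+3 (alpha g z n.+1) x.
  by rewrite -(lin_alpha_ext _ g z x n.+1 1) addn1.
have E0 : lin n.+1 (alpha g z n) x = lin n.+3 (alpha g z n) x.
  by rewrite -(lin_alpha_ext _ g z x n 2) addn2.
have c0' : c != 0 by rewrite gt_eqF.
have Rec : (c - 1) * (x * lin n.+3 (alpha g z n.+1) x) =
   c * (n.+1%:R + g) * lin n.+3 (alpha g z n.+2) x
   - (n.+1%:R + (n.+1%:R + g) * c) * lin n.+3 (alpha g z n.+1) x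
   + n.+1%:R * lin n.+3 (alpha g z n) x.
  rewrite linX; last by rewrite alpha_vanish.
  rewrite !linZ linB linD; apply: lin_ext => k _.
  by rewrite coef_rec.
rewrite !meixner_lin -/z E1 E0.
move: Rec.
move: (lin n.+3 (alpha g z n.+2) x) (lin n.+3 (alpha g z n.+1) x)
      (lin n.+3 (alpha g z n) x) => S2 S1 S0 Rec.
have h1 : c - 1 != 0 by rewrite subr_eq0 lt_eqF.
have h2 : 1 - c != 0 by rewrite subr_eq0 gt_eqF.
have h3 : g + n%:R != 0 by rewrite gt_eqF // ltr_wpDr.
have h4 : n.+1%:R + g != 0 by rewrite gt_eqF // ltr_wpDl.
have S2e : S2 = ((c - 1) * (x * S1) + (n.+1%:R + (n.+1%:R + g) * c) * S1
                 - n.+1%:R * S0) / (c * (n.+1%:R + g)).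
  rewrite Rec; field.
  have n0 : (0 : R) <= n%:R by [].
  repeat (apply/andP; split); apply/eqP; move=> H; lra.
rewrite S2e !exprS !pochS.
move: ((c / (c - 1)) ^+ n) (poch g n) => K P.
rewrite !natS in h4 *.
field.
have n0 : (0 : R) <= n%:R by [].
repeat (apply/andP; split); apply/eqP; move=> H; lra.
Qed.

Ltac nzc := repeat (apply/andP; split); apply/eqP; move=> ?; lra.

Lemma meixner0 (R : fieldType) (g c x : R) : meixner 0 g c x = 1.
Proof. by rewrite meixner_lin /lin big_ord1 /alpha !poch0 fact0 expr0 !mul1r !mulr1 invr1. Qed.

Lemma meixner1 (R : realFieldType) (g c x : R) : 0 < g -> 0 < c -> c < 1 ->
  meixner 1 g c x = x - g * c / (1 - c).
Proof.
move=> g0 c0 c1; rewrite meixner_lin /lin !big_ord_recr big_ord0 /= /alpha.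
rewrite !poch0 !poch1 fact0 expr0 expr1 !mul1r !mulr1 invr1 add0r.
field; nzc.
Qed.

Lemma meixner_at0 (R : fieldType) n (g c : R) :
  meixner n g c 0 = (c / (c - 1)) ^+ n * poch g n.
Proof.
rewrite meixner_lin /lin big_ord_recl /= big1 ?addr0.
  by rewrite /alpha !poch0 fact0 expr0 /= !mul1r invr1 !mulr1.
by move=> i _; rewrite /bump /= add1n poch_x0 mulr0.
Qed.

Lemma coef_contig (R : realFieldType) (b c : R) n k : -1 < b < 0 -> 0 < c -> c < 1 ->
  alpha b (1 - c^-1) n.+1 k - k.+1%:R * alpha b (1 - c^-1) n.+1 k.+1 =
  b^-1 * ((b + n.+1%:R) * alpha (b + 1) (1 - c^-1) n.+1 k
          + ((1 - c^-1) - 1) * n.+1%:R * alpha (b + 1) (1 - c^-1) n k).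
Proof.
move=> /andP[b1 b0] c0 c1.
have e1 : - (n.+1%:R : R) = - n%:R - 1 by rewrite natS; ring.
have n0 : (0 : R) <= n%:R by [].
have g0 : 0 < b + 1 by lra.
rewrite /alpha e1.
case: k => [|j].
- rewrite !poch0 !poch1 fact0 factS fact0 expr0 expr1 /= !natS.
  field; nzc.
rewrite !poch_m1 !(pochSl _ b) !pochS !factS !natrM !exprS.
have h1 := @poch_neq0 _ (b + 1) j g0.
have j0 : (0 : R) <= j%:R by [].
have h2 : (j`!%:R : R) != 0 by rewrite pnatr_eq0 -lt0n fact_gt0.
move: (poch (- n%:R) j) ((1 - c^-1) ^+ j) => P Z.
rewrite !natS.
field.
rewrite h1 h2 /=. nzc.
Qed.

Lemma meixner_contig (R : realFieldType) (b c y : R) n : -1 < b < 0 -> 0 < c -> c < 1 ->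
  meixner n.+1 b c (y + 1) =
  meixner n.+1 (b + 1) c y + (n.+1%:R / (1 - c)) * meixner n (b + 1) c y.
Proof.
move=> hb c0 c1; have /andP[b1 b0] := hb.
set z := 1 - c^-1.
have key : lin n.+2 (alpha b z n.+1) (y + 1) =
   b^-1 * ((b + n.+1%:R) * lin n.+2 (alpha (b + 1) z n.+1) y
            + ((z - 1) * n.+1%:R) * lin n.+2 (alpha (b + 1) z n) y).
  rewrite linS ?alpha_vanish //.
  rewrite !linZ linD linZ; apply: lin_ext => k _.
  by rewrite coef_contig //; ring.
have E0 : lin n.+1 (alpha (b + 1) z n) y = lin n.+2 (alpha (b + 1) z n) y.
  by rewrite -(lin_alpha_ext _ (b + 1) z y n 1) addn1.
rewrite !meixner_lin -/z key E0 (pochSl _ b) pochS exprS.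
move: ((c / (c - 1)) ^+ n) (poch (b + 1) n) => K P.
rewrite /z.
have n0 : (0 : R) <= n%:R by [].
rewrite !natS.
field; nzc.
Qed.

Definition bq {R : fieldType} (g c : R) (m : nat) : R := (m%:R + (m%:R + g) * c) / (1 - c).
Definition aq {R : fieldType} (g c : R) (m : nat) : R :=
  m%:R * (m.-1%:R + g) * c / (1 - c) ^+ 2.

Fixpoint Qpair {R : fieldType} (g c : R) (n : nat) : {poly R} * {poly R} :=
  match n with
  | 0 => (1, 'X - (bq g c 0)%:P)
  | m.+1 => let pq := Qpair g c m in
      (pq.2, ('X - (bq g c m.+1)%:P) * pq.2 - (aq g c m.+1)%:P * pq.1)
  end.

Definition Qp {R : fieldType} (g c : R) n := (Qpair g c n).1.

Lemma Qp_rec (R : fieldType) (g c : R) n :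
  Qp g c n.+2 = ('X - (bq g c n.+1)%:P) * Qp g c n.+1 - (aq g c n.+1)%:P * Qp g c n.
Proof. by []. Qed.

Lemma Qp0 (R : fieldType) (g c : R) : Qp g c 0 = 1. Proof. by []. Qed.
Lemma Qp1 (R : fieldType) (g c : R) : Qp g c 1 = 'X - (bq g c 0)%:P. Proof. by []. Qed.

Lemma Qp_horner (R : realFieldType) (g c x : R) n : 0 < g -> 0 < c -> c < 1 ->
  (Qp g c n).[x] = meixner n g c x.
Proof.
move=> g0 c0 c1.
suff : (Qp g c n).[x] = meixner n g c x /\ (Qp g c n.+1).[x] = meixner n.+1 g c x by case.
elim: n => [|n [IH1 IH2]].
  rewrite Qp0 Qp1 meixner0 meixner1 // hornerC; split => //.
  by rewrite hornerXsubC /bq mulr0n !add0r.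
split => //.
rewrite Qp_rec meixner_rec // hornerD hornerN !hornerM hornerXsubC !hornerC IH1 IH2.
by rewrite /bq /aq /=.
Qed.

Lemma monic_add_small (R : nzRingType) (p q : {poly R}) :
  p \is monic -> (size q < size p)%N -> (p + q \is monic) /\ size (p + q) = size p.
Proof.
move=> mp sq; split; last by rewrite size_polyDl.
by rewrite monicE lead_coefDl //; apply: mp.
Qed.

Lemma Qp_monic (R : fieldType) (g c : R) n :
  Qp g c n \is monic /\ size (Qp g c n) = n.+1.
Proof.
suff : (Qp g c n \is monic /\ size (Qp g c n) = n.+1) /\
       (Qp g c n.+1 \is monic /\ size (Qp g c n.+1) = n.+2) by case.
elim: n => [|n [[m1 s1] [m2 s2]]].
  by rewrite Qp0 Qp1 monic1 size_poly1 monicXsubC size_XsubC.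
split => //.
rewrite Qp_rec.
have mA : ('X - (bq g c n.+1)%:P) * Qp g c n.+1 \is monic by rewrite monicMl ?monicXsubC.
have sA : size (('X - (bq g c n.+1)%:P) * Qp g c n.+1) = n.+3.
  by rewrite size_monicM ?monicXsubC ?monic_neq0 // size_XsubC s2.
have sB : (size (- ((aq g c n.+1)%:P * Qp g c n)) < n.+3)%N.
  rewrite size_polyN mul_polyC (leq_ltn_trans (size_scale_leq _ _)) //.
  by rewrite s1 ltnS leqW.
have [] := @monic_add_small _ _ (- ((aq g c n.+1)%:P * Qp g c n)) mA; first by rewrite sA.
by move=> -> ->.
Qed.
Lemma prod_sign (R : realDomainType) (t : R) (s : nat -> R) n m :
  (forall i, (i < m)%N -> (i < n)%N -> s i < t) ->
  (forall i, (m <= i)%N -> (i < n)%N -> t < s i) ->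
  0 < (-1) ^+ (n - m) * \prod_(i < n) (t - s i).
Proof.
elim: n => [|n IH] H1 H2; first by rewrite sub0n big_ord0 mulr1 expr0.
rewrite big_ord_recr /=.
have IH' := IH (fun i im iltn => H1 i im (ltnW iltn)) (fun i im iltn => H2 i im (ltnW iltn)).
case: (leqP m n) => hm.
- rewrite subSn // exprS.
  have : t < s n by apply: H2 => //.
  move: IH'; move: ((-1) ^+ (n - m)) (\prod_(i < n) (t - s i)) => A P h1 h2.
  have -> : -1 * A * (P * (t - s n)) = (A * P) * (s n - t) by ring.
  by apply: mulr_gt0 => //; lra.
- have e1 : (n.+1 - m = 0)%N by apply/eqP; rewrite subn_eq0.
  have e2 : (n - m = 0)%N by apply/eqP; rewrite subn_eq0 ltnW.
  rewrite e1 expr0 mul1r; rewrite e2 expr0 mul1r in IH'.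
  have : s n < t by apply: H1 => //.
  move=> hh; have hh' : 0 < t - s n by rewrite subr_gt0.
  have := mulr_gt0 IH' hh'. by [].
Qed.


Lemma sign_alt (R : realDomainType) (a b : R) k :
  0 < (-1) ^+ k.+1 * a -> 0 < (-1) ^+ k * b -> a * b < 0.
Proof.
rewrite exprS; move=> h1 h2.
have AA : (-1) ^+ k * (-1) ^+ k = 1 :> R by rewrite -exprMn mulrNN mulr1 expr1n.
rewrite -[a * b]mul1r -AA.
have -> : (-1) ^+ k * (-1) ^+ k * (a * b) = - ((-1 * (-1) ^+ k * a) * ((-1) ^+ k * b)) by ring.
by rewrite oppr_lt0 mulr_gt0.
Qed.

Lemma horner_prodX (R : comNzRingType) n (s : nat -> R) x :
  (\prod_(i < n) ('X - (s i)%:P)).[x] = \prod_(i < n) (x - s i).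
Proof. by rewrite horner_prod; apply: eq_bigr => i _; rewrite hornerXsubC. Qed.

Lemma monic_size2 (R : nzRingType) (q : {poly R}) :
  q \is monic -> size q = 2 -> q = 'X - (- q`_0)%:P.
Proof.
move=> /monicP mq sq; apply/polyP => i.
rewrite coefB coefX coefC.
case: i => [|[|i]] /=.
- by rewrite sub0r opprK.
- by rewrite subr0 -mq lead_coefE sq.
- by rewrite subr0 nth_default // sq.
Qed.

Lemma factor_roots (R : realFieldType) (p : {poly R}) n (r : nat -> R) :
  p \is monic -> size p = n.+2 ->
  (forall i j, (i < j)%N -> (j < n)%N -> r i < r j) ->
  (forall i, (i < n)%N -> root p (r i)) ->
  exists w, p = ('X - w%:P) * \prod_(i < n) ('X - (r i)%:P).
Proof.
move=> mp sp rinc rr.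
set rs := [seq r i | i <- iota 0 n].
have Hall : all (root p) rs.
  apply/allP => z /mapP [i]; rewrite mem_iota add0n => /andP[_ hi] ->.
  exact: rr.
have Hu : poly.uniq_roots rs.
  rewrite uniq_rootsE map_inj_in_uniq ?iota_uniq //.
  move=> i j; rewrite !mem_iota !add0n => /andP[_ hi] /andP[_ hj] e.
  case: (ltngtP i j) => // h.
  - by have := rinc i j h hj; rewrite e ltxx.
  - by have := rinc j i h hi; rewrite e ltxx.
have [q hq] := uniq_roots_prod_XsubC Hall Hu.
have mprod : \prod_(z <- rs) ('X - z%:P) \is monic by apply: monic_prod_XsubC.
have sprod : size (\prod_(z <- rs) ('X - z%:P)) = n.+1.
  by rewrite size_prod_XsubC size_map size_iota.
have mq : q \is monic by rewrite -(monicMr q mprod) -hq.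
have sq : size q = 2.
  move: sp; rewrite hq size_Mmonic ?monic_neq0 // sprod addnS /=.
  move=> h; apply/eqP; rewrite -(eqn_add2r n) h add2n //.
have eP : \prod_(z <- rs) ('X - z%:P) = \prod_(i < n) ('X - (r i)%:P).
  by rewrite big_map -(big_mkord xpredT (fun i => 'X - (r i)%:P)) /index_iota subn0.
exists (- q`_0); by rewrite hq -eP -(@monic_size2 _ q mq sq).
Qed.

Lemma ivt_roots (R : rcfType) (p : {poly R}) (u : nat -> R) n :
  (forall m, (m < n)%N -> u m < u m.+1) ->
  (forall m, (m < n)%N -> p.[u m] * p.[u m.+1] < 0) ->
  exists t : nat -> R, forall m, (m < n)%N -> u m < t m < u m.+1 /\ root p (t m).
Proof.
elim: n => [|n IH] hu hs; first by exists (fun _ => 0).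
have [t ht] := IH (fun m hm => hu m (ltnW hm)) (fun m hm => hs m (ltnW hm)).
have [x hx rx] := poly_ivtoo (ltW (hu n (ltnSn n))) (hs n (ltnSn n)).
exists (fun m => if m == n then x else t m) => m; rewrite ltnS leq_eqVlt.
case: eqP => [-> _|hmn /= hm]; first by split => //; rewrite in_itv /= in hx.
exact: ht.
Qed.

Lemma Qp_sign0 (R : rcfType) (g c : R) n : 0 < g -> 0 < c -> c < 1 ->
  0 < (-1) ^+ n * (Qp g c n).[0].
Proof.
move=> g0 c0 c1; rewrite Qp_horner // meixner_at0 mulrA -exprMn.
have -> : -1 * (c / (c - 1)) = c / (1 - c) by field; nzc.
apply: mulr_gt0; last exact: poch_gt0.
by apply: exprn_gt0; apply: divr_gt0 => //; lra.
Qed.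

Lemma aq_pos (R : rcfType) (g c : R) n : 0 < g -> 0 < c -> c < 1 -> 0 < aq g c n.+1.
Proof.
move=> g0 c0 c1; rewrite /aq /=.
have h1 : 0 < (1 - c) ^+ 2 by apply: exprn_gt0; lra.
have n0 : (0 : R) <= n%:R by [].
apply: divr_gt0 => //; apply: mulr_gt0 => //; apply: mulr_gt0; last lra.
by rewrite ltr0n.
Qed.

Definition Jinv {R : rcfType} (g c : R) n : Prop :=
  exists s : nat -> R,
    [/\ (forall i j, (i < j)%N -> (j < n)%N -> s i < s j),
        (forall i, (i < n)%N -> 0 < s i),
        Qp g c n = \prod_(i < n) ('X - (s i)%:P) &
        (forall i, (i < n)%N -> 0 < (-1) ^+ (n - i.+1) * (Qp g c n.-1).[s i])].

Lemma J_step (R : rcfType) (g c : R) n : 0 < g -> 0 < c -> c < 1 ->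
  Jinv g c n -> Jinv g c n.+1.
Proof.
move=> g0 c0 c1 [s [sinc spos sfac ssgn]].
pose u m := if m is j.+1 then s j else 0.
have u_ge0 : forall m, (m <= n)%N -> 0 <= u m.
  by case=> [|j] hj //=; apply: ltW; apply: spos.
have u_lt : forall i j, (i < j)%N -> (j <= n)%N -> u i < u j.
  move=> i [|j] // hij hj /=.
  case: i hij => [|i] hij /=; first exact: spos.
  by apply: sinc.
have u_le : forall i j, (i <= j)%N -> (j <= n)%N -> u i <= u j.
  move=> i j; rewrite leq_eqVlt => /orP[/eqP -> //|hij hj].
  exact: ltW (u_lt i j hij hj).
have Qroot : forall i, (i < n)%N -> (Qp g c n).[s i] = 0.
  move=> i hi; rewrite sfac horner_prodX; apply/eqP/prodf_eq0.
  by exists (Ordinal hi) => //=; rewrite subrr.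
have hsign : forall m, (m <= n)%N -> 0 < (-1) ^+ (n.+1 - m) * (Qp g c n.+1).[u m].
  case=> [_|j hj]; first by rewrite subn0; apply: Qp_sign0.
  case: n {u_ge0 u_lt u_le} sinc spos sfac ssgn Qroot hj => [//|n] sinc spos sfac ssgn Qroot hj.
  have h := ssgn j hj; rewrite /= in h.
  rewrite /= Qp_rec hornerD hornerN !hornerM hornerXsubC !hornerC Qroot //.
  have e1 : (n.+2 - j.+1 = (n - j).+1)%N by rewrite subSS subSn.
  have e2 : (n.+1 - j.+1 = n - j)%N by rewrite subSS.
  rewrite e1 exprS; rewrite e2 in h.
  move: h; move: ((-1) ^+ (n - j)) ((Qp g c n).[s j]) => A Q h.
  have -> : -1 * A * ((s j - bq g c n.+1) * 0 - aq g c n.+1 * Q) = aq g c n.+1 * (A * Q) by ring.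
  by apply: mulr_gt0 => //; apply: aq_pos.
have halt : forall m, (m < n)%N -> (Qp g c n.+1).[u m] * (Qp g c n.+1).[u m.+1] < 0.
  move=> m hm; apply: (@sign_alt _ _ _ (n - m)).
    by rewrite -subSn ?(ltnW hm) //; apply: hsign; apply: ltnW.
  by rewrite -subSS; apply: hsign.
have [t ht] := @ivt_roots _ (Qp g c n.+1) u n (fun m hm => u_lt m m.+1 (ltnSn m) hm) halt.
have tinc : forall i j, (i < j)%N -> (j < n)%N -> t i < t j.
  move=> i j hij hj.
  have [/andP[_ h1] _] := ht i (ltn_trans hij hj).
  have [/andP[h2 _] _] := ht j hj.
  have h3 := u_le i.+1 j hij (ltnW hj).
  by apply: (lt_le_trans h1); apply: (le_trans h3 (ltW h2)).
have [mQ sQ] := Qp_monic _ g c n.+1.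
have [w hw] := @factor_roots _ (Qp g c n.+1) n t mQ sQ tinc (fun i hi => (ht i hi).2).
have wgt : u n < w.
  have := hsign n (leqnn n); rewrite subSnn expr1 mulN1r oppr_gt0.
  rewrite hw hornerM hornerXsubC horner_prodX.
  have hp : 0 < \prod_(i < n) (u n - t i).
    apply: prodr_gt0 => i _; rewrite subr_gt0.
    have [/andP[_ h1] _] := ht i (ltn_ord i).
    exact: (lt_le_trans h1 (u_le i.+1 n (ltn_ord i) (leqnn n))).
  by rewrite (pmulr_llt0 _ hp) subr_lt0.
have ut : forall i, (i <= n)%N -> u i < (if (i < n)%N then t i else w).
  move=> i hi; case: ifP => hin; first by have [/andP[]] := ht i hin.
  by have -> : i = n by apply/eqP; rewrite eqn_leq hi leqNgt hin.
exists (fun i => if (i < n)%N then t i else w); split.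
- move=> i j hij hj.
  have hi : (i < n)%N by apply: (leq_trans hij).
  rewrite hi; case: ifP => hjn; first exact: tinc.
  have [/andP[_ h1] _] := ht i hi.
  apply: (lt_le_trans h1); apply: ltW; apply: (le_lt_trans (u_le i.+1 n hi (leqnn n))).
  exact: wgt.
- move=> i hi; apply: (le_lt_trans (u_ge0 i hi)); exact: ut.
- rewrite hw big_ord_recr /= ltnn mulrC; congr (_ * _).
  by apply: eq_bigr => i _; rewrite ltn_ord.
- move=> i hi; rewrite /= sfac horner_prodX subSS.
  apply: (@prod_sign _ _ _ n i).
  + move=> k hk hkn.
    apply: (le_lt_trans _ (ut i hi)).
    exact: (u_le k.+1 i hk hi).
  + move=> k hk hkn.
    have hin : (i < n)%N by apply: (leq_ltn_trans hk hkn).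
    rewrite hin.
    have [/andP[_ h1] _] := ht i hin.
    apply: (lt_le_trans h1).
    exact: (u_le i.+1 k.+1 hk hkn).
Qed.

Lemma J_all (R : rcfType) (g c : R) n : 0 < g -> 0 < c -> c < 1 -> Jinv g c n.
Proof.
move=> g0 c0 c1; elim: n => [|n IH]; last exact: J_step.
by exists (fun _ => 0); split => //; rewrite big_ord0.
Qed.

Theorem proposition3p1 (R : rcfType) (beta c : R) (n : nat) :
  0 < - beta < 1 -> 0 < c < 1 -> (2 <= n)%N ->
  exists z : nat -> R,
    (forall i j, (i < j < n)%N -> z i < z j) /\
    (forall x : R, meixner n beta c x = 0 <-> exists2 i, (i < n)%N & x = z i) /\
    z 0%N < 0 /\ 1 < z 1%N.
Proof.
move=> /andP[b0 b1] /andP[c0 c1] hn.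
have hb : -1 < beta < 0 by apply/andP; split; lra.
have g0 : 0 < beta + 1 by lra.
case: n hn => [|m] // hn.
have hm : (0 < m)%N by [].
have [s [sinc spos sfac ssgn]] := J_all _ (beta + 1) c m.+1 g0 c0 c1.
pose k := m.+1%:R / (1 - c).
pose Mp := (Qp (beta + 1) c m.+1 + k *: Qp (beta + 1) c m) \Po ('X - 1%:P).
have hM : forall x, Mp.[x] = meixner m.+1 beta c x.
  move=> x; rewrite horner_comp hornerXsubC hornerD hornerZ !Qp_horner //.
  have -> : meixner m.+1 beta c x = meixner m.+1 beta c ((x - 1) + 1) by rewrite subrK.
  by rewrite meixner_contig.
have [mQ1 sQ1] := Qp_monic _ (beta + 1) c m.+1.
have [mQ0 sQ0] := Qp_monic _ (beta + 1) c m.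
have sk : (size (k *: Qp (beta + 1) c m) < size (Qp (beta + 1) c m.+1))%N.
  by apply: (leq_ltn_trans (size_scale_leq _ _)); rewrite sQ0 sQ1.
have [mI sI] := @monic_add_small _ (Qp (beta + 1) c m.+1) (k *: Qp (beta + 1) c m) mQ1 sk.
have sM : size Mp = m.+2 by rewrite /Mp size_comp_poly2 ?size_XsubC // sI sQ1.
have mM : Mp \is monic.
  rewrite monicE /Mp lead_coef_comp ?size_XsubC // lead_coefXsubC expr1n mulr1.
  exact: mI.
have Qroot : forall i, (i < m.+1)%N -> (Qp (beta + 1) c m.+1).[s i] = 0.
  move=> i hi; rewrite sfac horner_prodX; apply/eqP/prodf_eq0.
  by exists (Ordinal hi) => //=; rewrite subrr.
pose v i := s i + 1.
have hv : forall i, (i < m.+1)%N -> 0 < (-1) ^+ (m - i) * Mp.[v i].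
  move=> i hi; rewrite /Mp /v horner_comp hornerXsubC addrK hornerD hornerZ Qroot //.
  rewrite add0r mulrCA; apply: mulr_gt0.
    by apply: divr_gt0; [rewrite ltr0n | lra].
  by have := ssgn i hi; rewrite subSS.
have vinc : forall i j, (i < j)%N -> (j < m.+1)%N -> v i < v j.
  by move=> i j hij hj; rewrite /v ltrD2r; apply: sinc.
have halt : forall i, (i < m)%N -> Mp.[v i] * Mp.[v i.+1] < 0.
  move=> i hi; apply: (@sign_alt _ _ _ (m - i.+1)).
    by rewrite subnSK //; apply: hv; apply: ltnW.
  by apply: hv.
have [t ht] := @ivt_roots _ Mp v m (fun i hi => vinc i i.+1 (ltnSn i) hi) halt.
have tinc : forall i j, (i < j)%N -> (j < m)%N -> t i < t j.
  move=> i j hij hj.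
  have [/andP[_ h1] _] := ht i (ltn_trans hij hj).
  have [/andP[h2 _] _] := ht j hj.
  apply: (lt_le_trans h1); apply: (le_trans _ (ltW h2)).
  move: hij; rewrite leq_eqVlt => /orP[/eqP ->|hij]; first exact: lexx.
  by apply: ltW; apply: vinc => //; apply: ltnW.
have tpos : forall i, (i < m)%N -> 1 < t i.
  move=> i hi; have [/andP[h1 _] _] := ht i hi.
  have := spos i (ltnW hi); rewrite /v in h1; lra.
have [w hw] := @factor_roots _ Mp m t mM sM tinc (fun i hi => (ht i hi).2).
have wneg : w < 0.
  have h0 : 0 < (-1) ^+ m * Mp.[0].
    rewrite hM meixner_at0 (pochSl _ beta) exprS.
    have -> : (-1) ^+ m * (c / (c - 1) * (c / (c - 1)) ^+ m * (beta * poch (beta + 1) m))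
       = ((-1 * (c / (c - 1))) ^+ m) * (c * beta / (c - 1)) * poch (beta + 1) m.
      rewrite [(-1 * _) ^+ _]exprMn.
      move: ((-1) ^+ m) ((c / (c - 1)) ^+ m) (poch (beta + 1) m) => A Y P.
      by field; nzc.
    have -> : -1 * (c / (c - 1)) = c / (1 - c) by field; nzc.
    apply: mulr_gt0; last exact: poch_gt0.
    apply: mulr_gt0; first by apply: exprn_gt0; apply: divr_gt0 => //; lra.
    have -> : c * beta / (c - 1) = (c * - beta) / (1 - c) by field; nzc.
    by apply: divr_gt0; [apply: mulr_gt0 | lra].
  rewrite hw hornerM hornerXsubC horner_prodX in h0.
  have hp := @prod_sign _ 0 t m 0 (fun i h _ => False_ind _ (notF h))
     (fun i _ hi => (lt_trans ltr01 (tpos i hi))).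
  rewrite subn0 in hp.
  move: h0 hp; move: ((-1) ^+ m) (\prod_(i < m) (0 - t i)) => A P h0 hp.
  have e : A * ((0 - w) * P) = (0 - w) * (A * P) by ring.
  rewrite e in h0; move: (A * P) h0 hp => Q h0 hp.
  nra.
exists (fun i => if i is j.+1 then t j else w); split.
  move=> i [|j] /andP[hij hj] //.
  case: i hij => [|i] hij /=.
    by apply: (lt_trans wneg); apply: (lt_trans ltr01); apply: tpos.
  by apply: tinc.
split; last first.
  by split => //=; apply: tpos.
move=> x; rewrite -hM hw hornerM hornerXsubC horner_prodX; split.
  move/eqP; rewrite mulf_eq0 => /orP[|/prodf_eq0 [i _]].
    by rewrite subr_eq0 => /eqP ->; exists 0%N.
  by rewrite subr_eq0 => /eqP ->; exists i.+1; rewrite ?ltnS ?ltn_ord.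
move=> [[|i] hi ->] /=; first by rewrite subrr mul0r.
apply/eqP; rewrite mulf_eq0; apply/orP; right; apply/prodf_eq0.
have hi' : (i < m)%N by [].
by exists (Ordinal hi') => //=; rewrite subrr.
Qed.
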